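(* For $n\ge 2$ let $$S_n^{(1)}(t):=\sum_{T\in\mathfrak{D}\mathfrak{T}^{\oplus}_n}t^{n_\ominus(T)},\qquad S_n^{(2)}(t):=\sum_{T\in\mathfrak{D}\mathfrak{T}^{\ominus}_n}t^{n_\ominus(T)},$$ and set $S_1^{(1)}(t)=S_1^{(2)}(t)=1$. Let $S_n(t)=\sum_{\pi\in\mathfrak{S}_n(2413,3142)}t^{\mathrm{des}(\pi)}$. Then for $n\geq2$, $$S_n^{(1)}(t)=\sum_{j=1}^{n-1}S_j(t)S_{n-j}^{(2)}(t)\qquad\text{and}\qquad S_n^{(2)}(t)=t\sum_{j=1}^{n-1}S_j(t)S_{n-j}^{(1)}(t).$$
   Context: $\mathfrak{S}_n(2413,3142)$ is the set of permutations of $[n]$ avoiding the patterns $2413$ and $3142$; $\mathrm{des}(\pi)=\#\{i\in[n-1]:\pi_i>\pi_{i+1}\}$. A binary tree is either empty or a root with a left and a right subtree, both binary trees. A right chain is a maximal sequence of nodes $v_1,\dots,v_l$ with $v_1$ the root or a left child and each $v_{j+1}$ the right child of $v_j$. A di-sk tree is a binary tree with nodes labelled $\oplus$ or $\ominus$ such that labels alternate along every right chain; $\mathfrak{D}\mathfrak{T}_n$ is the set of di-sk trees with $n-1$ nodes, $n_\ominus(T)$ the number of nodes labelled $\ominus$, and $\mathfrak{D}\mathfrak{T}^{\oplus}_n$ (resp. $\mathfrak{D}\mathfrak{T}^{\ominus}_n$) the set of trees in $\mathfrak{D}\mathfrak{T}_n$ whose root is labelled $\oplus$ (resp. $\ominus$).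 It is known that $S_n(t)=\sum_{T\in\mathfrak{D}\mathfrak{T}_n}t^{n_\ominus(T)}$. *)

(* Defs.v *)
From HB Require Import structures.
From mathcomp Require Import all_boot all_order all_algebra all_fingroup.
Set Implicit Arguments. Unset Strict Implicit. Unset Printing Implicit Defensive.
Import GRing.Theory.
Local Open Scope ring_scope.

(* s : 'S_n is read as the word s(0) s(1) ... s(n-1) (positions and values
   shifted down by one). *)

Definition contains2413 n (s : 'S_n) : bool :=
  [exists a : 'I_n, exists b : 'I_n, exists c : 'I_n, exists d : 'I_n,
    [&& (a < b)%N, (b < c)%N, (c < d)%N,
        (s c < s a)%N, (s a < s d)%N & (s d < s b)%N]].

Definition contains3142 n (s : 'S_n) : bool :=
  [exists a : 'I_n, exists b : 'I_n, exists c : 'I_n, exists d : 'I_n,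
    [&& (a < b)%N, (b < c)%N, (c < d)%N,
        (s b < s d)%N, (s d < s a)%N & (s a < s c)%N]].

Definition avoids_2413_3142 n (s : 'S_n) : bool :=
  ~~ contains2413 s && ~~ contains3142 s.

Definition des n (s : 'S_n) : nat :=
  #|[set i : 'I_n | [exists j : 'I_n, (val j == (val i).+1) && (s j < s i)%N]]|.

Definition Sperm (n : nat) : {poly int} :=
  \sum_(s : 'S_n | avoids_2413_3142 s) 'X ^+ des s.

(* label true = (+), label false = (-) *)
Inductive btree : Type :=
| Leaf : btree
| Node : bool -> btree -> btree -> btree.

Fixpoint nnodes (T : btree) : nat :=
  match T with Leaf => 0 | Node _ l r => (nnodes l + nnodes r).+1 end.

Fixpoint nminus (T : btree) : nat :=
  match T with
  | Leaf => 0
  | Node b l r => (~~ b : nat) + nminus l + nminus r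
  end.

(* labels alternate along every right chain: a node and its right child
   (when present) carry different labels *)
Fixpoint disk (T : btree) : bool :=
  match T with
  | Leaf => true
  | Node b l r =>
      [&& disk l, disk r &
          match r with Leaf => true | Node b' _ _ => b' != b end]
  end.

Definition root_label (T : btree) : option bool :=
  match T with Leaf => None | Node b _ _ => Some b end.

(* all binary trees with exactly k nodes (fuel f >= k) *)
Fixpoint trees_fuel (f k : nat) : seq btree :=
  match f with
  | 0 => if k == 0%N then [:: Leaf] else [::]
  | f'.+1 =>
      match k with
      | 0 => [:: Leaf]
      | k'.+1 =>
          flatten [seq flatten [seq flatten [seq [seq Node b L R | b <- [:: true; false]]
                                              | R <- trees_fuel f' (k' - i)]
                               | L <- trees_fuel f' i]
                  | i <- iota 0 k'.+1]
      end
  end.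

Definition trees_of_size (k : nat) : seq btree := trees_fuel k k.

(* sum over di-sk trees with n-1 nodes and root labelled lab of t^{n_-(T)};
   by convention equal to 1 for n = 1 *)
Definition Stree (lab : bool) (n : nat) : {poly int} :=
  if n == 1%N then 1 else
  \sum_(T <- trees_of_size n.-1 | disk T && (root_label T == Some lab))
     'X ^+ nminus T.

Definition S1 := Stree true.
Definition S2 := Stree false.

(* Main.v *)
Require Import Defs.
From mathcomp Require Import all_boot all_order all_algebra all_fingroup.
From mathcomp Require Import zify.

Lemma trees_fuelS f k : trees_fuel f.+1 k.+1 =
  flatten [seq flatten [seq flatten [seq [seq Node b L R | b <- [:: true; false]]
                                              | R <- trees_fuel f (k - i)]
                               | L <- trees_fuel f i]
                  | i <- iota 0 k.+1].
Proof. by []. Qed.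

Lemma trees_fuel_eq f f' k : k <= f -> k <= f' -> trees_fuel f k = trees_fuel f' k.
Proof.
elim: f f' k => [|f IH] [|f'] [|k] // Hf Hf'.
rewrite !trees_fuelS.
congr flatten; apply/eq_in_map => i; rewrite mem_iota => /andP[_ Hi].
rewrite (IH f' i) ?(IH f' (k - i)) //; lia.
Qed.


Set Implicit Arguments. Unset Strict Implicit. Unset Printing Implicit Defensive.

Lemma subseq_nthE (l s : seq nat) i k : i < size l -> subseq s (drop i.+1 l) ->
  k <= i -> subseq (nth 0 l i :: s) (drop k l).
Proof.
move=> Hi Hs Hk.
rewrite -(cat_take_drop (i - k) (drop k l)) drop_drop subnK // (drop_nth 0 Hi).
apply: subseq_trans (suffix_subseq _ _); by rewrite /= eqxx.
Qed.

Lemma subseq_consE (x : nat) s t : subseq (x :: s) t ->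
  exists2 i, i < size t & nth 0 t i = x /\ subseq s (drop i.+1 t).
Proof.
elim: t => [|y t IH] //=.
case: eqP => [-> Hs| _ /IH [i Hi [H1 H2]]]; first by exists 0 => //; rewrite /= drop0.
by exists i.+1.
Qed.

Lemma subseq_consD (x : nat) s l k : subseq (x :: s) (drop k l) ->
  exists i, [/\ k <= i, i < size l, nth 0 l i = x & subseq s (drop i.+1 l)].
Proof.
move/subseq_consE => [i Hi [H1 H2]]; exists (k + i).
rewrite size_drop in Hi; rewrite -nth_drop H1; split => //; try lia.
by rewrite drop_drop in H2; rewrite (_ : (k + i).+1 = i.+1 + k) //; lia.
Qed.

Lemma idx_sub (l : seq nat) a b c d : a < b -> b < c -> c < d -> d < size l ->
  subseq [:: nth 0 l a; nth 0 l b; nth 0 l c; nth 0 l d] l.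
Proof.
move=> Hab Hbc Hcd Hd.
rewrite -[l in subseq _ l]drop0.
apply: subseq_nthE => //; first lia.
apply: subseq_nthE => //; first lia.
apply: subseq_nthE => //; first lia.
by apply: subseq_nthE => //; rewrite sub0seq.
Qed.

Lemma sub_idx (l : seq nat) x1 x2 x3 x4 : subseq [:: x1; x2; x3; x4] l ->
  exists a b c d, [/\ a < b, b < c, c < d & d < size l] /\
    [/\ nth 0 l a = x1, nth 0 l b = x2, nth 0 l c = x3 & nth 0 l d = x4].
Proof.
rewrite -[l in subseq _ l]drop0 => H.
have [a [_ Ha E1 {}H]] := subseq_consD H.
have [b [Hb _ E2 {}H]] := subseq_consD H.
have [c [Hc _ E3 {}H]] := subseq_consD H.
have [d [Hd Hd' E4 {}H]] := subseq_consD H.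
by exists a, b, c, d.
Qed.

Definition P2413 (l : seq nat) := exists a b c d,
  subseq [:: a; b; c; d] l /\ [/\ c < a, a < d & d < b].
Definition P3142 (l : seq nat) := exists a b c d,
  subseq [:: a; b; c; d] l /\ [/\ b < d, d < a & a < c].

Definition c2413 (l : seq nat) : bool :=
  [exists a : 'I_(size l), exists b : 'I_(size l), exists c : 'I_(size l),
   exists d : 'I_(size l),
    [&& (a < b), (b < c), (c < d),
        (nth 0 l c < nth 0 l a), (nth 0 l a < nth 0 l d) & (nth 0 l d < nth 0 l b)]].
Definition c3142 (l : seq nat) : bool :=
  [exists a : 'I_(size l), exists b : 'I_(size l), exists c : 'I_(size l),
   exists d : 'I_(size l),
    [&& (a < b), (b < c), (c < d),
        (nth 0 l b < nth 0 l d), (nth 0 l d < nth 0 l a) & (nth 0 l a < nth 0 l c)]].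

Lemma c2413P l : reflect (P2413 l) (c2413 l).
Proof.
apply: (iffP idP).
  case/existsP => a /existsP [b /existsP [c /existsP [d /and5P [H1 H2 H3 H4 /andP [H5 H6]]]]].
  exists (nth 0 l a), (nth 0 l b), (nth 0 l c), (nth 0 l d); split => //.
  by apply: idx_sub.
case=> x1 [x2 [x3 [x4 [/sub_idx [a [b [c [d [[H1 H2 H3 H4] [E1 E2 E3 E4]]]]]] [H5 H6 H7]]]]].
have Ha : a < size l by lia.
have Hb : b < size l by lia.
have Hc : c < size l by lia.
apply/existsP; exists (Ordinal Ha); apply/existsP; exists (Ordinal Hb).
apply/existsP; exists (Ordinal Hc); apply/existsP; exists (Ordinal H4) => /=.
by rewrite E1 E2 E3 E4 H1 H2 H3 H5 H6 H7.
Qed.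

Lemma c3142P l : reflect (P3142 l) (c3142 l).
Proof.
apply: (iffP idP).
  case/existsP => a /existsP [b /existsP [c /existsP [d /and5P [H1 H2 H3 H4 /andP [H5 H6]]]]].
  exists (nth 0 l a), (nth 0 l b), (nth 0 l c), (nth 0 l d); split => //.
  by apply: idx_sub.
case=> x1 [x2 [x3 [x4 [/sub_idx [a [b [c [d [[H1 H2 H3 H4] [E1 E2 E3 E4]]]]]] [H5 H6 H7]]]]].
have Ha : a < size l by lia.
have Hb : b < size l by lia.
have Hc : c < size l by lia.
apply/existsP; exists (Ordinal Ha); apply/existsP; exists (Ordinal Hb).
apply/existsP; exists (Ordinal Hc); apply/existsP; exists (Ordinal H4) => /=.
by rewrite E1 E2 E3 E4 H1 H2 H3 H5 H6 H7.
Qed.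

Definition avL (l : seq nat) : bool := ~~ c2413 l && ~~ c3142 l.

Lemma avLP l : avL l <-> (~ P2413 l /\ ~ P3142 l).
Proof.
rewrite /avL; split.
  by case/andP => /c2413P H1 /c3142P H2.
by case=> H1 H2; apply/andP; split; apply/negP; [move/c2413P | move/c3142P].
Qed.

Lemma P2413_sub l1 l2 : subseq l1 l2 -> P2413 l1 -> P2413 l2.
Proof.
move=> H [a [b [c [d [Hs Hi]]]]]; exists a, b, c, d; split => //.
exact: subseq_trans H.
Qed.
Lemma P3142_sub l1 l2 : subseq l1 l2 -> P3142 l1 -> P3142 l2.
Proof.
move=> H [a [b [c [d [Hs Hi]]]]]; exists a, b, c, d; split => //.
exact: subseq_trans H.
Qed.

Lemma avL_sub l1 l2 : subseq l1 l2 -> avL l2 -> avL l1.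
Proof.
move=> H /avLP [H1 H2]; apply/avLP; split => [/(P2413_sub H)|/(P3142_sub H)] //.
Qed.

Lemma P_small l : size l < 4 -> avL l.
Proof.
move=> Hs; apply/avLP; split => [[a [b [c [d [/size_subseq H _]]]]]|[a [b [c [d [/size_subseq H _]]]]]] /=;
  simpl in H; lia.
Qed.

Definition ltS (A B : seq nat) : bool := all (fun x => all (fun y => x < y) B) A.

Lemma ltSP A B x y : ltS A B -> x \in A -> y \in B -> x < y.
Proof. by move=> /allP H /H /allP H' /H'. Qed.

Lemma ltS_intro A B : (forall x y, x \in A -> y \in B -> x < y) -> ltS A B.
Proof. by move=> H; apply/allP => x Hx; apply/allP => y Hy; apply: H. Qed.

Lemma subseq_catE (s A B : seq nat) : subseq s (A ++ B) ->
  exists s1 s2, [/\ s = s1 ++ s2, subseq s1 A & subseq s2 B].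
Proof.
elim: A s => [|a A IH] s /=; first by move=> H; exists [::], s.
case: s => [|x s]; first by move=> _; exists [::], [::]; rewrite sub0seq.
rewrite /=; case: eqP => [->|Hne].
  by move/IH => [s1 [s2 [-> H1 H2]]]; exists (a :: s1), s2; rewrite /= eqxx.
move/IH => [s1 [s2 [E H1 H2]]]; exists s1, s2; split => //.
exact: subseq_trans H1 (subseq_cons _ _).
Qed.

Lemma sub4_cat (A B : seq nat) (a b c d : nat) : subseq [:: a; b; c; d] (A ++ B) ->
  subseq [:: a; b; c; d] A \/ subseq [:: a; b; c; d] B \/
      [/\ a \in A, b \in B, c \in B & d \in B] \/
      [/\ a \in A, b \in A, c \in B & d \in B] \/
      [/\ a \in A, b \in A, c \in A & d \in B].
Proof.
move/subseq_catE => [s1 [s2 [E H1 H2]]].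
move: E H1 H2; case: s1 => [|x1 [|x2 [|x3 [|x4 [|x5 s1]]]]] /= E H1 H2.
- by right; left; rewrite E.
- case: E => -> E; rewrite -E in H2.
  have M2 := mem_subseq H2; have M1 := mem_subseq H1.
  by right; right; left; split; [apply: M1 | apply: M2 ..]; rewrite !inE eqxx ?orbT.
- case: E => -> -> E; rewrite -E in H2.
  have M2 := mem_subseq H2; have M1 := mem_subseq H1.
  by right; right; right; left; split; [apply: M1 | apply: M1 | apply: M2 ..]; rewrite !inE eqxx ?orbT.
- case: E => -> -> -> E; rewrite -E in H2.
  have M2 := mem_subseq H2; have M1 := mem_subseq H1.
  by right; right; right; right; split; [apply: M1 | apply: M1 | apply: M1 | apply: M2]; rewrite !inE eqxx ?orbT.
- case: E => -> -> -> -> E.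
  by left.
- by case: E => _ _ _ _ /(congr1 size).

Qed.

Lemma P2413_cat_lt A B : ltS A B -> P2413 (A ++ B) -> P2413 A \/ P2413 B.
Proof.
move=> H [a [b [c [d [/sub4_cat Hs [Hi1 Hi2 Hi3]]]]]].
case: Hs => [Hs|[Hs|[[Ma Mb Mc Md]|[[Ma Mb Mc Md]|[Ma Mb Mc Md]]]]].
- by left; exists a, b, c, d.
- by right; exists a, b, c, d.
- by have := ltSP H Ma Mc; lia.
- by have := ltSP H Ma Mc; lia.
- by have := ltSP H Mb Md; lia.
Qed.

Lemma P3142_cat_lt A B : ltS A B -> P3142 (A ++ B) -> P3142 A \/ P3142 B.
Proof.
move=> H [a [b [c [d [/sub4_cat Hs [Hi1 Hi2 Hi3]]]]]].
case: Hs => [Hs|[Hs|[[Ma Mb Mc Md]|[[Ma Mb Mc Md]|[Ma Mb Mc Md]]]]].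
- by left; exists a, b, c, d.
- by right; exists a, b, c, d.
- by have := ltSP H Ma Mb; lia.
- by have := ltSP H Ma Md; lia.
- by have := ltSP H Mc Md; lia.
Qed.

Lemma P2413_cat_gt A B : ltS B A -> P2413 (A ++ B) -> P2413 A \/ P2413 B.
Proof.
move=> H [a [b [c [d [/sub4_cat Hs [Hi1 Hi2 Hi3]]]]]].
case: Hs => [Hs|[Hs|[[Ma Mb Mc Md]|[[Ma Mb Mc Md]|[Ma Mb Mc Md]]]]].
- by left; exists a, b, c, d.
- by right; exists a, b, c, d.
- by have := ltSP H Mb Ma; lia.
- by have := ltSP H Md Ma; lia.
- by have := ltSP H Md Ma; lia.
Qed.

Lemma P3142_cat_gt A B : ltS B A -> P3142 (A ++ B) -> P3142 A \/ P3142 B.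
Proof.
move=> H [a [b [c [d [/sub4_cat Hs [Hi1 Hi2 Hi3]]]]]].
case: Hs => [Hs|[Hs|[[Ma Mb Mc Md]|[[Ma Mb Mc Md]|[Ma Mb Mc Md]]]]].
- by left; exists a, b, c, d.
- by right; exists a, b, c, d.
- by have := ltSP H Mc Ma; lia.
- by have := ltSP H Mc Ma; lia.
- by have := ltSP H Md Mb; lia.
Qed.

Lemma avL_cat_lt A B : ltS A B -> avL A -> avL B -> avL (A ++ B).
Proof.
move=> H /avLP [HA1 HA2] /avLP [HB1 HB2]; apply/avLP; split.
  by move/(P2413_cat_lt H) => [].
by move/(P3142_cat_lt H) => [].
Qed.

Lemma avL_cat_gt A B : ltS B A -> avL A -> avL B -> avL (A ++ B).
Proof.
move=> H /avLP [HA1 HA2] /avLP [HB1 HB2]; apply/avLP; split.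
  by move/(P2413_cat_gt H) => [].
by move/(P3142_cat_gt H) => [].
Qed.

Lemma sub_map_add k s (l : seq nat) : subseq s (map (addn k) l) ->
  exists2 s', subseq s' l & s = map (addn k) s'.
Proof.
case/subseqP => m Hm ->; exists (mask m l); first exact: mask_subseq.
by rewrite map_mask.
Qed.

Lemma avL_shift k l : avL (map (addn k) l) = avL l.
Proof.
apply/idP/idP => /avLP [H1 H2]; apply/avLP; split.
- move=> [a [b [c [d [Hs Hi]]]]]; apply: H1.
  exists (k + a), (k + b), (k + c), (k + d); split; last by case: Hi => ? ? ?; split; lia.
  exact: (map_subseq (addn k) Hs).
- move=> [a [b [c [d [Hs Hi]]]]]; apply: H2.
  exists (k + a), (k + b), (k + c), (k + d); split; last by case: Hi => ? ? ?; split; lia.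
  exact: (map_subseq (addn k) Hs).
- move=> [a [b [c [d [/sub_map_add [s' Hs E] Hi]]]]]; apply: H1.
  move: E Hs; case: s' => [|a' [|b' [|c' [|d' [|e' s']]]]] //= [Ea Eb Ec Ed].
  move=> Hs; exists a', b', c', d'; split => //; case: Hi => ? ? ?; split; lia.
- move=> [a [b [c [d [/sub_map_add [s' Hs E] Hi]]]]]; apply: H2.
  move: E Hs; case: s' => [|a' [|b' [|c' [|d' [|e' s']]]]] //= [Ea Eb Ec Ed].
  move=> Hs; exists a', b', c', d'; split => //; case: Hi => ? ? ?; split; lia.
Qed.




Lemma take_sub (l : seq nat) j : subseq (take j l) l.
Proof. by rewrite -{2}(cat_take_drop j l) prefix_subseq. Qed.
Lemma drop_sub (l : seq nat) j : subseq (drop j l) l.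
Proof. by rewrite -{2}(cat_take_drop j l) suffix_subseq. Qed.

Definition LeftD (l : seq nat) := exists2 j, 0 < j < size l & ltS (take j l) (drop j l).
Definition RightD (l : seq nat) := exists2 j, 0 < j < size l & ltS (drop j l) (take j l).

Ltac clear_seq := repeat match goal with
  | H : context [subseq _ _] |- _ => clear H
  | H : context [ltS _ _] |- _ => clear H
  | H : context [avL _] |- _ => clear H
  | H : context [uniq _] |- _ => clear H
  | H : context [_ \in _] |- _ => clear H
  | H : context [all _ _] |- _ => clear H
  | H : context [LeftD _] |- _ => clear H
  | H : context [RightD _] |- _ => clear H
  | H : forall _, _ |- _ => clear H
  | H : exists _, _ |- _ => clear H
  | H : _ = _ :> seq _ |- _ => clear H
  end.
Ltac slia := clear_seq; lia.

Lemma mem_take_nth (l : seq nat) j i : i < j -> i < size l -> nth 0 l i \in take j l.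
Proof.
move=> Hij Hi; rewrite -(nth_take 0 Hij) mem_nth // size_take.
by case: ifP.
Qed.

Lemma mem_drop_nth (l : seq nat) j i : j <= i -> i < size l -> nth 0 l i \in drop j l.
Proof.
move=> Hij Hi; rewrite -(subnKC Hij) -nth_drop mem_nth // size_drop ltn_sub2r // (leq_ltn_trans Hij Hi) //.
Qed.

Lemma LR_excl l : LeftD l -> RightD l -> False.
Proof.
case=> j Hj H1 [j' Hj' H2].
have h1 : nth 0 l 0 \in take j l by apply: mem_take_nth; lia.
have h2 : nth 0 l 0 \in take j' l by apply: mem_take_nth; lia.
have t1 : nth 0 l (size l).-1 \in drop j l by apply: mem_drop_nth; lia.
have t2 : nth 0 l (size l).-1 \in drop j' l by apply: mem_drop_nth; lia.
have := ltSP H1 h1 t1; have := ltSP H2 t2 h2; lia.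
Qed.

Lemma mem_take_le (l : seq nat) i j u : i <= j -> u \in take i l -> u \in take j l.
Proof. by move=> Hij; rewrite -(take_takel _ Hij); apply: mem_take. Qed.

Lemma two_elems (A : seq nat) a1 a2 : a1 \in A -> a2 \in A -> a1 != a2 -> 1 < size A.
Proof. by case: A => [|y [|z t]] //=; rewrite !inE => /eqP -> /eqP ->; rewrite eqxx. Qed.

Lemma sep_struct n (l : seq nat) : size l <= n -> uniq l -> avL l -> 1 < size l ->
  LeftD l \/ RightD l.
Proof.
elim: n l => [|n IH] l; first by case: l.
case/lastP: l => [//|l' x] Hs Hu Hav Hsz.
rewrite size_rcons in Hs Hsz.
rewrite rcons_uniq in Hu; case/andP: Hu => Hx Hu'.
have Hsub : forall A, subseq A l' -> avL A :=
  fun A H => avL_sub (subseq_trans H (subseq_rcons _ _)) Hav.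
have El : rcons l' x = l' ++ [:: x] by rewrite cats1.
have [Hl1|Hl2] := leqP (size l') 1.
  case: l' Hs Hsz Hx Hu' El Hsub Hl1 Hav => [|y [|z t]] //= _ _ Hx _ _ _ _ _.
  rewrite inE in Hx.
  case: (ltngtP y x) => Hyx.
  - by left; exists 1 => //=; rewrite /ltS /= Hyx.
  - by right; exists 1 => //=; rewrite /ltS /= Hyx.
  - by rewrite Hyx eqxx in Hx.
have Hav' : avL l' := Hsub l' (subseq_refl _).
have [HL|HR] := IH l' (ltac:(slia)) Hu' Hav' Hl2.
-
  pose P j := (0 < j < size l') && ltS (take j l') (drop j l').
  have exP : exists j, P j by case: HL => j Hj H; exists j; rewrite /P Hj H.
  case: (ex_minnP exP) => j /andP [Hj HAB] Hmin.
  have Hjl : j < size l' by slia.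
  have HsA : size (take j l') = j by rewrite size_takel // ltnW.
  have HsB : size (drop j l') = size l' - j by rewrite size_drop.
  have EAB : l' = take j l' ++ drop j l' by rewrite cat_take_drop.
  have HB0 : nth 0 (drop j l') 0 \in drop j l' by rewrite mem_nth // HsB; slia.
  have HA0 : nth 0 (take j l') 0 \in take j l' by rewrite mem_nth // HsA; slia.
  have [Hall|Hnall] := boolP (all (fun a => a < x) (take j l')).
    left; exists j; first by rewrite size_rcons; slia.
    rewrite El take_cat drop_cat Hjl.
    apply: ltS_intro => a y Ha; rewrite mem_cat inE => /orP [Hy|/eqP ->].
      exact: ltSP HAB Ha Hy.
    exact: (allP Hall) _ Ha.
  have [Hall2|Hnall2] := boolP (all (fun a => x < a) (take j l')).
    right; exists (size l'); first by rewrite size_rcons; slia.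
    rewrite El take_size_cat // drop_size_cat //.
    apply: ltS_intro => y z; rewrite inE => /eqP -> Hz.
    rewrite EAB mem_cat in Hz; case/orP: Hz => Hz; first exact: (allP Hall2).
    have := (allP Hall2) _ HA0; have := ltSP HAB HA0 Hz; slia.
  case/allPn: Hnall => a1 Ha1 /negP Ha1x.
  case/allPn: Hnall2 => a2 Ha2 /negP Ha2x.
  have Hxa1 : x <> a1 by move=> E; rewrite E (mem_take Ha1) in Hx.
  have Hxa2 : x <> a2 by move=> E; rewrite E (mem_take Ha2) in Hx.
  have HA2 : 1 < size (take j l').
    apply: (two_elems Ha1 Ha2); apply/eqP; slia.
  have [HLA|HRA] := IH (take j l') (ltac:(slia)) (take_uniq _ Hu')
                       (Hsub _ (take_sub _ _)) HA2.
  + exfalso; case: HLA => j' Hj' HCD; rewrite HsA in Hj'.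
    have : j <= j'; last by slia.
    apply: Hmin; rewrite /P; apply/andP; split; first by slia.
    rewrite take_takel in HCD; last by slia.
    rewrite {2}EAB drop_cat (_ : j' < size (take j l')); last by rewrite HsA; slia.
    apply: ltS_intro => u v Hu; rewrite mem_cat => /orP [Hv|Hv].
      exact: ltSP HCD Hu Hv.
    by apply: ltSP HAB _ Hv; apply: (mem_take_le (i := j')) Hu; slia.
  + case: HRA => j' Hj' HDC; rewrite HsA in Hj'.
    have EA : take j l' = take j' (take j l') ++ drop j' (take j l') by rewrite cat_take_drop.
    have HC0 : nth 0 (take j' (take j l')) 0 \in take j' (take j l').
      by rewrite mem_nth // size_takel ?HsA; slia.
    have HD0 : nth 0 (drop j' (take j l')) 0 \in drop j' (take j l').
      by rewrite mem_nth // size_drop HsA; slia.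
    have [c Hc Hxc] : exists2 c, c \in take j' (take j l') & x < c.
      move: Ha1; rewrite {1}EA mem_cat => /orP [H|H].
        by exists a1 => //; slia.
      exists (nth 0 (take j' (take j l')) 0) => //.
      have := ltSP HDC H HC0; slia.
    have [d Hd Hdx] : exists2 d, d \in drop j' (take j l') & d < x.
      move: Ha2; rewrite {1}EA mem_cat => /orP [H|H].
        exists (nth 0 (drop j' (take j l')) 0) => //.
        have := ltSP HDC HD0 H; slia.
      by exists a2 => //; slia.
    have Hcb := ltSP HAB (mem_take Hc) HB0.
    exfalso; move/avLP: Hav => [_ H3]; apply: H3.
    exists c, d, (nth 0 (drop j l') 0), x; split; last by split; slia.
    rewrite El (_ : l' ++ [:: x] = take j' (take j l') ++ drop j' (take j l') ++
                 drop j l' ++ [:: x]); last by rewrite !catA -EA -EAB.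
    change [:: c; d; nth 0 (drop j l') 0; x] with
      ([:: c] ++ [:: d] ++ [:: nth 0 (drop j l') 0] ++ [:: x]).
    apply: cat_subseq; first by rewrite sub1seq.
    apply: cat_subseq; first by rewrite sub1seq.
    apply: cat_subseq; first by rewrite sub1seq.
    exact: subseq_refl.
-
  pose P j := (0 < j < size l') && ltS (drop j l') (take j l').
  have exP : exists j, P j by case: HR => j Hj H; exists j; rewrite /P Hj H.
  case: (ex_minnP exP) => j /andP [Hj HAB] Hmin.
  have Hjl : j < size l' by slia.
  have HsA : size (take j l') = j by rewrite size_takel // ltnW.
  have HsB : size (drop j l') = size l' - j by rewrite size_drop.
  have EAB : l' = take j l' ++ drop j l' by rewrite cat_take_drop.
  have HB0 : nth 0 (drop j l') 0 \in drop j l' by rewrite mem_nth // HsB; slia.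
  have HA0 : nth 0 (take j l') 0 \in take j l' by rewrite mem_nth // HsA; slia.
  have [Hall|Hnall] := boolP (all (fun a => x < a) (take j l')).
    right; exists j; first by rewrite size_rcons; slia.
    rewrite El take_cat drop_cat Hjl.
    apply: ltS_intro => y a; rewrite mem_cat inE => /orP [Hy|/eqP ->] Ha.
      exact: ltSP HAB Hy Ha.
    exact: (allP Hall) _ Ha.
  have [Hall2|Hnall2] := boolP (all (fun a => a < x) (take j l')).
    left; exists (size l'); first by rewrite size_rcons; slia.
    rewrite El take_size_cat // drop_size_cat //.
    apply: ltS_intro => z y Hz; rewrite inE => /eqP ->.
    rewrite EAB mem_cat in Hz; case/orP: Hz => Hz; first exact: (allP Hall2).
    have := (allP Hall2) _ HA0; have := ltSP HAB Hz HA0; slia.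
  case/allPn: Hnall => a1 Ha1 /negP Ha1x.
  case/allPn: Hnall2 => a2 Ha2 /negP Ha2x.
  have Hxa1 : x <> a1 by move=> E; rewrite E (mem_take Ha1) in Hx.
  have Hxa2 : x <> a2 by move=> E; rewrite E (mem_take Ha2) in Hx.
  have HA2 : 1 < size (take j l').
    apply: (two_elems Ha1 Ha2); apply/eqP; slia.
  have [HLA|HRA] := IH (take j l') (ltac:(slia)) (take_uniq _ Hu')
                       (Hsub _ (take_sub _ _)) HA2.
  + case: HLA => j' Hj' HCD; rewrite HsA in Hj'.
    have EA : take j l' = take j' (take j l') ++ drop j' (take j l') by rewrite cat_take_drop.
    have HC0 : nth 0 (take j' (take j l')) 0 \in take j' (take j l').
      by rewrite mem_nth // size_takel ?HsA; slia.
    have HD0 : nth 0 (drop j' (take j l')) 0 \in drop j' (take j l').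
      by rewrite mem_nth // size_drop HsA; slia.
    have [c Hc Hxc] : exists2 c, c \in take j' (take j l') & c < x.
      move: Ha1; rewrite {1}EA mem_cat => /orP [H|H].
        by exists a1 => //; slia.
      exists (nth 0 (take j' (take j l')) 0) => //.
      have := ltSP HCD HC0 H; slia.
    have [d Hd Hdx] : exists2 d, d \in drop j' (take j l') & x < d.
      move: Ha2; rewrite {1}EA mem_cat => /orP [H|H].
        exists (nth 0 (drop j' (take j l')) 0) => //.
        have := ltSP HCD H HD0; slia.
      by exists a2 => //; slia.
    have Hcb := ltSP HAB HB0 (mem_take Hc).
    exfalso; move/avLP: Hav => [H3 _]; apply: H3.
    exists c, d, (nth 0 (drop j l') 0), x; split; last by split; slia.
    rewrite El (_ : l' ++ [:: x] = take j' (take j l') ++ drop j' (take j l') ++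
                 drop j l' ++ [:: x]); last by rewrite !catA -EA -EAB.
    change [:: c; d; nth 0 (drop j l') 0; x] with
      ([:: c] ++ [:: d] ++ [:: nth 0 (drop j l') 0] ++ [:: x]).
    apply: cat_subseq; first by rewrite sub1seq.
    apply: cat_subseq; first by rewrite sub1seq.
    apply: cat_subseq; first by rewrite sub1seq.
    exact: subseq_refl.
  + exfalso; case: HRA => j' Hj' HCD.
    have : j <= j'; last by slia.
    apply: Hmin; rewrite /P; apply/andP; split; first by slia.
    rewrite take_takel in HCD; last by slia.
    rewrite {1}EAB drop_cat (_ : j' < size (take j l')); last by rewrite HsA; slia.
    apply: ltS_intro => v u; rewrite mem_cat => /orP [Hv|Hv] Hu.
      exact: ltSP HCD Hv Hu.
    by apply: ltSP HAB Hv _; apply: (mem_take_le (i := j')) Hu; slia.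
Qed.

Definition isP n (l : seq nat) : bool := [&& uniq l, size l == n & all (fun x => x < n) l].

Lemma small_eq (s : seq nat) m k : uniq s -> {subset s <= iota m k} -> size s = k -> s =i iota m k.
Proof. by move=> Hu Hsub Hs; apply: (uniq_min_size Hu Hsub _).2; rewrite size_iota Hs. Qed.

Lemma size_bound (s : seq nat) m k : uniq s -> {subset s <= iota m k} -> size s <= k.
Proof. by move=> Hu Hsub; rewrite -(size_iota m k); apply: uniq_leq_size. Qed.

Lemma isPE n l : perm_eq l (iota 0 n) = isP n l.
Proof.
apply/idP/idP.
  move=> H; rewrite /isP (perm_uniq H) iota_uniq (perm_size H) size_iota eqxx (perm_all _ H) /=.
  by apply/allP => x; rewrite mem_iota.
case/and3P => Hu /eqP Hs Ha; apply: uniq_perm => //; first exact: iota_uniq.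
apply: small_eq => // x /(allP Ha); by rewrite mem_iota.
Qed.

Definition PL n := permutations (iota 0 n).

Lemma mem_PL n l : (l \in PL n) = isP n l.
Proof. by rewrite mem_permutations isPE. Qed.

Lemma PL_uniq n : uniq (PL n).
Proof. exact: permutations_uniq. Qed.

Definition psplit (l : seq nat) j := all (fun x => x < j) (take j l).
Definition msplit n (l : seq nat) j := all (fun x => n - j <= x) (take j l).
Definition pdec n l := has (psplit l) (iota 1 (n - 1)).
Definition mdec n l := has (msplit n l) (iota 1 (n - 1)).

Lemma disj_take_drop (l : seq nat) j y : uniq l -> y \in drop j l -> y \in take j l -> False.
Proof.
move=> Hu Hy Ht; move: Hu; rewrite -(cat_take_drop j l) cat_uniq => /and3P [_ /hasPn H _].
by move: (H y Hy); rewrite /= Ht.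
Qed.

Lemma psplit_drop n l j : isP n l -> j <= n -> psplit l j -> all (fun y => j <= y) (drop j l).
Proof.
case/and3P => Hu /eqP Hs Ha Hj Hp.
have Heq : take j l =i iota 0 j.
  apply: small_eq; first exact: take_uniq.
    by move=> x /(allP Hp); rewrite mem_iota.
  by rewrite size_takel // Hs.
apply/allP => y Hy; rewrite leqNgt; apply/negP => Hyj.
apply: (disj_take_drop Hu Hy); by rewrite Heq mem_iota.
Qed.

Lemma psplit_ltS n l j : isP n l -> j <= n -> psplit l j = ltS (take j l) (drop j l).
Proof.
move=> HP Hj; apply/idP/idP => [Hp|Hl].
  have Hd := psplit_drop HP Hj Hp.
  apply: ltS_intro => x y Hx Hy; have := (allP Hp) x Hx; have := (allP Hd) y Hy; lia.
apply/allP => x Hx; rewrite ltnNge; apply/negP => Hjx.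
case/and3P: HP => Hu /eqP Hs Ha.
have Hxn : x < n := allP Ha x (mem_take Hx).
have : size (drop j l) <= n - x.+1.
  apply: (size_bound (m := x.+1)); first exact: drop_uniq.
  move=> y Hy; rewrite mem_iota; have := ltSP Hl Hx Hy; have := allP Ha y (mem_drop Hy); lia.
rewrite size_drop Hs; lia.
Qed.

Lemma msplit_drop n l j : isP n l -> j <= n -> msplit n l j -> all (fun y => y < n - j) (drop j l).
Proof.
case/and3P => Hu /eqP Hs Ha Hj Hp.
have Heq : take j l =i iota (n - j) j.
  apply: small_eq; first exact: take_uniq.
    move=> x Hx; rewrite mem_iota; have := (allP Hp) x Hx; have := allP Ha x (mem_take Hx); lia.
  by rewrite size_takel // Hs.
apply/allP => y Hy; rewrite ltnNge; apply/negP => Hyj.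
apply: (disj_take_drop Hu Hy); rewrite Heq mem_iota; have := allP Ha y (mem_drop Hy); lia.
Qed.

Lemma msplit_ltS n l j : isP n l -> j <= n -> msplit n l j = ltS (drop j l) (take j l).
Proof.
move=> HP Hj; apply/idP/idP => [Hp|Hl].
  have Hd := msplit_drop HP Hj Hp.
  apply: ltS_intro => y x Hy Hx; have := (allP Hp) x Hx; have := (allP Hd) y Hy; lia.
apply/allP => x Hx; rewrite leqNgt; apply/negP => Hjx.
case/and3P: HP => Hu /eqP Hs Ha.
have : size (drop j l) <= x.
  apply: (size_bound (m := 0)); first exact: drop_uniq.
  move=> y Hy; rewrite mem_iota; have := ltSP Hl Hy Hx; lia.
rewrite size_drop Hs; lia.
Qed.

Lemma pdecP n l : isP n l -> reflect (LeftD l) (pdec n l).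
Proof.
move=> HP; have Hs : size l = n by case/and3P: HP => _ /eqP.
apply: (iffP hasP).
  case=> j; rewrite mem_iota => Hj Hp; exists j; first by rewrite Hs; lia.
  by rewrite -(psplit_ltS HP) //; lia.
case=> j Hj Hl; exists j; first by rewrite mem_iota; lia.
by rewrite (psplit_ltS HP) //; lia.
Qed.

Lemma mdecP n l : isP n l -> reflect (RightD l) (mdec n l).
Proof.
move=> HP; have Hs : size l = n by case/and3P: HP => _ /eqP.
apply: (iffP hasP).
  case=> j; rewrite mem_iota => Hj Hp; exists j; first by rewrite Hs; lia.
  by rewrite -(msplit_ltS HP) //; lia.
case=> j Hj Hl; exists j; first by rewrite mem_iota; lia.
by rewrite (msplit_ltS HP) //; lia.
Qed.

Lemma dec_cases n l : isP n l -> avL l -> 1 < n -> ~~ pdec n l = mdec n l.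
Proof.
move=> HP Hav Hn; have Hs : size l = n by case/and3P: HP => _ /eqP.
have Hu : uniq l by case/and3P: HP.
apply/idP/idP.
  move=> Hnp; apply/(mdecP HP).
  have H2 : 1 < size l by rewrite Hs.
  case: (sep_struct (leqnn _) Hu Hav H2) => // HL.
  by case/negP: Hnp; apply/(pdecP HP).
move/(mdecP HP) => HR; apply/negP => /(pdecP HP) HL; exact: LR_excl HL HR.
Qed.

Lemma find_char (p : pred nat) n j : 0 < j < n ->
  (has p (iota 1 (n - 1)) && ((find p (iota 1 (n - 1))).+1 == j)) =
  p j && all (fun k => ~~ p k) (iota 1 (j - 1)).
Proof.
move=> Hj; apply/idP/idP.
  case/andP => Hh /eqP Hf; have Hi := Hh; rewrite has_find size_iota in Hi.
  have Hnth := nth_find 0 Hh; rewrite nth_iota // add1n Hf in Hnth.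
  rewrite Hnth /=; apply/allP => k; rewrite mem_iota => Hk.
  have Hb : k.-1 < find p (iota 1 (n - 1)) by lia.
  have := before_find 0 Hb; rewrite nth_iota; last by lia.
  by rewrite (_ : 1 + k.-1 = k) ?Hnth //; [move->|lia].
case/andP => Hpj /allP Hall.
have Hh : has p (iota 1 (n - 1)) by apply/hasP; exists j => //; rewrite mem_iota; lia.
rewrite Hh /=; apply/eqP.
have Hi := Hh; rewrite has_find size_iota in Hi.
case: (ltngtP (find p (iota 1 (n - 1))).+1 j) => // H.
  have := nth_find 0 Hh; rewrite nth_iota // add1n.
  have Hk : (find p (iota 1 (n - 1))).+1 \in iota 1 (j - 1) by rewrite mem_iota; lia.
  by have := Hall _ Hk => /negbTE ->.
have Hb : j.-1 < find p (iota 1 (n - 1)) by lia.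
have := before_find 0 Hb; rewrite nth_iota; last by lia.
by rewrite (_ : 1 + j.-1 = j) ?Hpj //; lia.
Qed.

Fixpoint desl (l : seq nat) : nat :=
  if l is x :: t then (if t is y :: _ then (y < x) else false) + desl t else 0.

Lemma desl_cons x t : desl (x :: t) = (if t is y :: _ then (y < x) else false) + desl t.
Proof. by []. Qed.

Lemma desl_cons_cat x s y t :
  desl (x :: s ++ y :: t) = desl (x :: s) + (y < last x s) + desl (y :: t).
Proof.
elim: s x => [|z s IH] x; first by rewrite /= addn0.
rewrite cat_cons desl_cons IH [desl (x :: z :: s)]desl_cons /= !addnA.
by [].
Qed.

Lemma desl_cat (s t : seq nat) : s != [::] -> t != [::] ->
  desl (s ++ t) = desl s + (head 0 t < last 0 s) + desl t.
Proof. by case: s => [|x s] // _; case: t => [|y t] // _; rewrite cat_cons desl_cons_cat. Qed.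

Lemma desl_shift k l : desl (map (addn k) l) = desl l.
Proof. elim: l => [|x t IH] //; rewrite map_cons !desl_cons IH; case: t {IH} => //= y t; by rewrite ltn_add2l. Qed.

Lemma last_mem (s : seq nat) : s != [::] -> last 0 s \in s.
Proof. by case: s => [|x s] // _; rewrite /= mem_last. Qed.

Lemma head_mem (s : seq nat) : s != [::] -> head 0 s \in s.
Proof. by case: s => [|x s] // _; rewrite /= inE eqxx. Qed.

Definition fsp n l := (find (psplit l) (iota 1 (n - 1))).+1.
Definition fsm n l := (find (msplit n l) (iota 1 (n - 1))).+1.

Lemma isP_size n l : isP n l -> size l = n.
Proof. by case/and3P => _ /eqP. Qed.

Lemma plus_mem n j l : 0 < j < n ->
  (l \in [seq l <- PL n | avL l && pdec n l && (fsp n l == j)]) =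
  (l \in [seq s ++ map (addn j) t | s <- [seq s <- PL j | avL s && ~~ pdec j s],
                                     t <- [seq t <- PL (n - j) | avL t]]).
Proof.
move=> Hj; rewrite mem_filter mem_PL -[avL l && _ && _]andbA /pdec /fsp find_char //.
apply/idP/allpairsP.
- case/andP => /andP [Hav /andP [Hpj Hall]] HP.
  have Hjn : j <= n by lia.
  have Hd := psplit_drop HP Hjn Hpj.
  case/and3P: (HP) => Hu /eqP Hs Ha.
  exists (take j l, map (subn^~ j) (drop j l)) => /=; split.
  + rewrite mem_filter mem_PL (avL_sub (take_sub _ _) Hav) /=.
    apply/andP; split.
      rewrite -all_predC; apply/allP => k Hk /=.
      have Hkj : k <= j by move: Hk; rewrite mem_iota; lia.
      by rewrite /psplit take_takel //; apply: (allP Hall).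
    by rewrite /isP take_uniq //= size_takel ?Hs // eqxx.
  + have Eq : map (addn j) (map (subn^~ j) (drop j l)) = drop j l.
      rewrite -map_comp map_id_in // => y Hy /=; rewrite subnKC //; exact: (allP Hd).
    rewrite mem_filter mem_PL -(avL_shift j) Eq (avL_sub (drop_sub _ _) Hav) /=.
    apply/and3P; split.
    * rewrite map_inj_in_uniq ?drop_uniq // => x y Hx Hy /= E.
      have := (allP Hd) x Hx; have := (allP Hd) y Hy; lia.
    * by rewrite size_map size_drop Hs.
    * apply/allP => y /mapP [z Hz ->]; have := (allP Hd) z Hz.
      have := (allP Ha) z (mem_drop Hz); lia.
  + rewrite -map_comp map_id_in ?cat_take_drop // => y Hy /=; rewrite subnKC //; exact: (allP Hd).
- case=> [[s t]] /= [Hs Ht ->].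
  rewrite !mem_filter !mem_PL in Hs Ht.
  case/andP: Hs => /andP [Havs Hnds] HPs; case/andP: Ht => Havt HPt.
  case/and3P: HPs => Hus /eqP Hss Has; case/and3P: HPt => Hut /eqP Hst Hat.
  have Hlt : ltS s (map (addn j) t).
    apply: ltS_intro => x y Hx /mapP [z _ ->]; have := (allP Has) x Hx; lia.
  rewrite avL_cat_lt // ?avL_shift //=.
  apply/andP; split; first (apply/andP; split).
  + by rewrite /psplit take_size_cat.
  + move: Hnds; rewrite -all_predC => /allP Hnds; apply/allP => k Hk.
    have Hkj : k < j by move: Hk; rewrite mem_iota; lia.
    by rewrite /psplit take_cat Hss Hkj; apply: Hnds.
  + apply/and3P; split.
    * rewrite cat_uniq Hus (map_inj_uniq (@addnI j)) Hut andbT /=.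
      apply/hasPn => y /mapP [z _ ->]; apply/negP => H; have := (allP Has) _ H; lia.
    * by rewrite size_cat size_map Hss Hst; apply/eqP; lia.
    * rewrite all_cat; apply/andP; split.
        apply/allP => x Hx; have := (allP Has) x Hx; lia.
      rewrite all_map; apply/allP => x Hx /=; have := (allP Hat) x Hx; lia.
Qed.

Lemma minus_mem n j l : 0 < j < n ->
  (l \in [seq l <- PL n | avL l && mdec n l && (fsm n l == j)]) =
  (l \in [seq map (addn (n - j)) s ++ t | s <- [seq s <- PL j | avL s && ~~ mdec j s],
                                     t <- [seq t <- PL (n - j) | avL t]]).
Proof.
move=> Hj; rewrite mem_filter mem_PL -[avL l && _ && _]andbA /mdec /fsm find_char //.
apply/idP/allpairsP.
- case/andP => /andP [Hav /andP [Hpj Hall]] HP.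
  have Hjn : j <= n by lia.
  have Hd := msplit_drop HP Hjn Hpj.
  case/and3P: (HP) => Hu /eqP Hs Ha.
  have Eq : map (addn (n - j)) (map (subn^~ (n - j)) (take j l)) = take j l.
    rewrite -map_comp map_id_in // => y Hy /=; rewrite subnKC //; exact: (allP Hpj).
  exists (map (subn^~ (n - j)) (take j l), drop j l) => /=; split.
  + rewrite mem_filter mem_PL -(avL_shift (n - j)) Eq (avL_sub (take_sub _ _) Hav) /=.
    apply/andP; split.
      rewrite -all_predC; apply/allP => k Hk /=.
      have Hkj : k <= j by move: Hk; rewrite mem_iota; lia.
      rewrite /msplit -map_take take_takel // all_map.
      have := (allP Hall) k Hk; apply: contra => H.
      apply/allP => x Hx; have := (allP H) x Hx; have := (allP Hpj) x (mem_take_le Hkj Hx); rewrite /=; lia.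
    apply/and3P; split.
    * rewrite map_inj_in_uniq ?take_uniq // => x y Hx Hy /= E.
      have := (allP Hpj) x Hx; have := (allP Hpj) y Hy; lia.
    * by rewrite size_map size_takel ?Hs.
    * apply/allP => y /mapP [z Hz ->]; have := (allP Hpj) z Hz.
      have := (allP Ha) z (mem_take Hz); lia.
  + rewrite mem_filter mem_PL (avL_sub (drop_sub _ _) Hav) /=.
    by rewrite /isP drop_uniq //= size_drop Hs eqxx.
  + by rewrite Eq cat_take_drop.
- case=> [[s t]] /= [Hs Ht ->].
  rewrite !mem_filter !mem_PL in Hs Ht.
  case/andP: Hs => /andP [Havs Hnds] HPs; case/andP: Ht => Havt HPt.
  case/and3P: HPs => Hus /eqP Hss Has; case/and3P: HPt => Hut /eqP Hst Hat.
  have Hlt : ltS t (map (addn (n - j)) s).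
    apply: ltS_intro => y x Hy /mapP [z _ ->]; have := (allP Hat) y Hy; lia.
  rewrite avL_cat_gt // ?avL_shift //=.
  apply/andP; split; first (apply/andP; split).
  + rewrite /msplit take_size_cat ?size_map // all_map.
    by apply/allP => x _ /=; lia.
  + move: Hnds; rewrite -all_predC => /allP Hnds; apply/allP => k Hk.
    have Hkj : k < j by move: Hk; rewrite mem_iota; lia.
    rewrite /msplit take_cat size_map Hss Hkj -map_take all_map.
    have := Hnds k Hk; apply: contra => H.
    apply/allP => x Hx; have := (allP H) x Hx; rewrite /=; lia.
  + apply/and3P; split.
    * rewrite cat_uniq (map_inj_uniq (@addnI _)) Hus Hut andbT /=.
      apply/hasPn => y Hy; apply/negP => /mapP [z _ E]; have := (allP Hat) _ Hy; lia.
    * by rewrite size_cat size_map Hss Hst; apply/eqP; lia.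
    * rewrite all_cat; apply/andP; split.
        rewrite all_map; apply/allP => x Hx /=; have := (allP Has) x Hx; lia.
      apply/allP => x Hx; have := (allP Hat) x Hx; lia.
Qed.

Lemma plus_uniq n j : uniq [seq s ++ map (addn j) t | s <- [seq s <- PL j | avL s && ~~ pdec j s],
                                     t <- [seq t <- PL (n - j) | avL t]].
Proof.
apply: allpairs_uniq; try exact: (filter_uniq _ (PL_uniq _)).
move=> [a b] [c d] /allpairsP [[a' b'] /= [Ha _ [-> ->]]] /allpairsP [[c' d'] /= [Hc _ [-> ->]]] /= E.
rewrite mem_filter mem_PL in Ha; rewrite mem_filter mem_PL in Hc.
have Sa := isP_size (andP Ha).2; have Sc := isP_size (andP Hc).2.
move/eqP: E; rewrite eqseq_cat; last by rewrite Sa Sc.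
by case/andP => /eqP -> /eqP /(inj_map (@addnI j)) ->.
Qed.

Lemma minus_uniq n j : uniq [seq map (addn (n - j)) s ++ t | s <- [seq s <- PL j | avL s && ~~ mdec j s],
                                     t <- [seq t <- PL (n - j) | avL t]].
Proof.
apply: allpairs_uniq; try exact: (filter_uniq _ (PL_uniq _)).
move=> [a b] [c d] /allpairsP [[a' b'] /= [Ha _ [-> ->]]] /allpairsP [[c' d'] /= [Hc _ [-> ->]]] /= E.
rewrite mem_filter mem_PL in Ha; rewrite mem_filter mem_PL in Hc.
have Sa := isP_size (andP Ha).2; have Sc := isP_size (andP Hc).2.
move/eqP: E; rewrite eqseq_cat; last by rewrite !size_map Sa Sc.
by case/andP => /eqP /(inj_map (@addnI _)) -> /eqP ->.
Qed.

Lemma isP_nil n l : (0 < n)%N -> isP n l -> l != [::].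
Proof. by move=> Hn HP; apply/eqP => E; move: (isP_size HP); rewrite E /= => H; lia. Qed.


Definition lp n (s : 'S_n) : seq nat := [seq val (s i) | i <- enum 'I_n].

Lemma size_lp n (s : 'S_n) : size (lp s) = n.
Proof. by rewrite size_map size_enum_ord. Qed.

Lemma nth_lp n (s : 'S_n) (o : 'I_n) : nth 0 (lp s) o = val (s o).
Proof.
rewrite (nth_map o) ?size_enum_ord //; congr (val (s _)); apply: val_inj.
by rewrite /= nth_enum_ord.
Qed.

Lemma isP_lp n (s : 'S_n) : isP n (lp s).
Proof.
apply/and3P; split.
- rewrite map_inj_uniq ?enum_uniq // => i j /val_inj; exact: perm_inj.
- by rewrite size_lp.
- by apply/allP => x /mapP [i _ ->]; apply: ltn_ord.
Qed.

Lemma lp_inj n : injective (@lp n).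
Proof.
move=> s1 s2 E; apply/permP => o; apply: val_inj.
by rewrite -!nth_lp E.
Qed.

Lemma lp_surj n l : isP n l -> exists s : 'S_n, lp s = l.
Proof.
case/and3P => Hu /eqP Hs Ha.
have Hf : forall i : 'I_n, nth 0 l i < n.
  move=> i; apply: (allP Ha); apply: mem_nth; rewrite Hs; exact: ltn_ord.
pose f := fun i : 'I_n => Ordinal (Hf i).
have finj : injective f.
  move=> i j /(congr1 val) /= /eqP; rewrite nth_uniq ?Hs // => /eqP; exact: val_inj.
exists (perm finj); apply: (@eq_from_nth _ 0); first by rewrite size_lp Hs.
move=> i; rewrite size_lp => Hi.
by rewrite -[i]/(val (Ordinal Hi)) nth_lp permE.
Qed.

Lemma cont2413_lp n (s : 'S_n) : contains2413 s = c2413 (lp s).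
Proof.
apply/idP/c2413P.
  case/existsP => a /existsP [b /existsP [c /existsP [d /and5P [H1 H2 H3 H4 /andP [H5 H6]]]]].
  exists (val (s a)), (val (s b)), (val (s c)), (val (s d)); split => //.
  rewrite -!nth_lp; apply: idx_sub => //; by rewrite size_lp.
case=> x1 [x2 [x3 [x4 [/sub_idx [a [b [c [d [[H1 H2 H3 H4] [E1 E2 E3 E4]]]]]] [H5 H6 H7]]]]].
rewrite size_lp in H4.
have Ha : a < n by lia.
have Hb : b < n by lia.
have Hc : c < n by lia.
move: E1 E2 E3 E4.
rewrite -[a]/(val (Ordinal Ha)) -[b]/(val (Ordinal Hb)) -[c]/(val (Ordinal Hc)).
rewrite -[d]/(val (Ordinal H4)) !nth_lp => E1 E2 E3 E4.
apply/existsP; exists (Ordinal Ha); apply/existsP; exists (Ordinal Hb).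
apply/existsP; exists (Ordinal Hc); apply/existsP; exists (Ordinal H4) => /=.
by rewrite E1 E2 E3 E4 H1 H2 H3 H5 H6 H7.
Qed.

Lemma cont3142_lp n (s : 'S_n) : contains3142 s = c3142 (lp s).
Proof.
apply/idP/c3142P.
  case/existsP => a /existsP [b /existsP [c /existsP [d /and5P [H1 H2 H3 H4 /andP [H5 H6]]]]].
  exists (val (s a)), (val (s b)), (val (s c)), (val (s d)); split => //.
  rewrite -!nth_lp; apply: idx_sub => //; by rewrite size_lp.
case=> x1 [x2 [x3 [x4 [/sub_idx [a [b [c [d [[H1 H2 H3 H4] [E1 E2 E3 E4]]]]]] [H5 H6 H7]]]]].
rewrite size_lp in H4.
have Ha : a < n by lia.
have Hb : b < n by lia.
have Hc : c < n by lia.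
move: E1 E2 E3 E4.
rewrite -[a]/(val (Ordinal Ha)) -[b]/(val (Ordinal Hb)) -[c]/(val (Ordinal Hc)).
rewrite -[d]/(val (Ordinal H4)) !nth_lp => E1 E2 E3 E4.
apply/existsP; exists (Ordinal Ha); apply/existsP; exists (Ordinal Hb).
apply/existsP; exists (Ordinal Hc); apply/existsP; exists (Ordinal H4) => /=.
by rewrite E1 E2 E3 E4 H1 H2 H3 H5 H6 H7.
Qed.

Lemma avoids_lp n (s : 'S_n) : avoids_2413_3142 s = avL (lp s).
Proof. by rewrite /avoids_2413_3142 /avL cont2413_lp cont3142_lp. Qed.

Lemma desl_sum l : desl l = \sum_(0 <= i < size l) ((i.+1 < size l) && (nth 0 l i.+1 < nth 0 l i)).
Proof.
elim: l => [|x t IH]; first by rewrite big_nil.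
rewrite desl_cons IH /= big_nat_recl //=; congr addn.
by case: t {IH} => [|y t] //=; rewrite ltnS.
Qed.

Lemma des_lp n (s : 'S_n) : des s = desl (lp s).
Proof.
rewrite desl_sum size_lp /des -sum1_card big_mkcond /= big_mkord.
apply: eq_bigr => i _; rewrite inE.
rewrite (_ : [exists j, _] = ((i.+1 < n) && (nth 0 (lp s) i.+1 < nth 0 (lp s) i)));
  first by case: (_ && _).
apply/idP/idP => [/existsP [j /andP [/eqP Ej Hj]]|/andP [Hi Hlt]].
  have Hi : i.+1 < n by rewrite -Ej ltn_ord.
  rewrite Hi /= -[i.+1]/(val (Ordinal Hi)) !nth_lp.
  by rewrite (_ : Ordinal Hi = j) //; apply: val_inj.
idtac.
apply/existsP; exists (Ordinal Hi); rewrite /= eqxx /=.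
by move: Hlt; rewrite -[i.+1]/(val (Ordinal Hi)) !nth_lp.
Qed.

Import GRing.Theory.
Local Open Scope ring_scope.

Definition Fp (l : seq nat) : {poly int} := 'X ^+ desl l.
Definition Sp n := \sum_(l <- PL n | avL l) Fp l.
Definition Qp n := \sum_(l <- PL n | avL l && pdec n l) Fp l.
Definition Qm n := \sum_(l <- PL n | avL l && mdec n l) Fp l.
Definition Np n := \sum_(l <- PL n | avL l && ~~ pdec n l) Fp l.
Definition Nm n := \sum_(l <- PL n | avL l && ~~ mdec n l) Fp l.

Lemma Sp_split n : Sp n = Qp n + Np n.
Proof. exact: (bigID (pdec n)). Qed.

Lemma Sp_splitm n : Sp n = Qm n + Nm n.
Proof. exact: (bigID (mdec n)). Qed.

Lemma Np_Qm n : (1 < n)%N -> Np n = Qm n.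
Proof.
move=> Hn; rewrite /Np /Qm big_seq_cond [RHS]big_seq_cond; apply: eq_bigl => l.
case HP: (l \in PL n) => //=; rewrite mem_PL in HP.
case Hav: (avL l) => //=; exact: dec_cases.
Qed.

Lemma Nm_Qp n : (1 < n)%N -> Nm n = Qp n.
Proof.
move=> Hn; rewrite /Nm /Qp big_seq_cond [RHS]big_seq_cond; apply: eq_bigl => l.
case HP: (l \in PL n) => //=; rewrite mem_PL in HP.
case Hav: (avL l) => //=; by rewrite -(dec_cases HP Hav Hn) negbK.
Qed.

Lemma PL1 : PL 1 = [:: [:: 0%N]].
Proof. by []. Qed.

Lemma Sp1 : Sp 1 = 1.
Proof. by rewrite /Sp PL1 big_cons big_nil P_small // addr0 /Fp expr0. Qed.
Lemma Np1 : Np 1 = 1.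
Proof. by rewrite /Np PL1 big_cons big_nil P_small // addr0 /Fp expr0. Qed.
Lemma Nm1 : Nm 1 = 1.
Proof. by rewrite /Nm PL1 big_cons big_nil P_small // addr0 /Fp expr0. Qed.

Lemma big_part (r : seq (seq nat)) (P : pred (seq nat)) (k : seq nat -> nat) (js : seq nat)
    (F : seq nat -> {poly int}) :
  uniq js -> (forall x, P x -> k x \in js) ->
  \sum_(x <- r | P x) F x = \sum_(j <- js) \sum_(x <- r | P x && (k x == j)) F x.
Proof.
move=> Hu Hk.
rewrite (eq_bigr (fun j => \sum_(x <- r) (if P x && (k x == j) then F x else 0)));
  last by move=> j _; rewrite big_mkcond.
rewrite exchange_big big_mkcond; apply: eq_bigr => x _.
case Px: (P x) => /=; last by rewrite big1.
rewrite (bigD1_seq (k x)) ?Hk //= eqxx big1 ?addr0 // => j.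
by rewrite eq_sym => /negbTE ->.
Qed.

Lemma has_iota_find (p : pred nat) n : has p (iota 1 (n - 1)) ->
  (find p (iota 1 (n - 1))).+1 \in iota 1 (n - 1).
Proof. by rewrite has_find size_iota mem_iota => H; apply/andP; split => //; lia. Qed.

Lemma Qp_rec n : Qp n = \sum_(1 <= j < n) Np j * Sp (n - j).
Proof.
rewrite /Qp (big_part _ (k := fsp n) (js := iota 1 (n - 1))); first last.
- by move=> l /andP [_ H]; apply: has_iota_find.
- exact: iota_uniq.
apply: eq_big_seq => j; rewrite mem_iota => Hj.
have Hj' : (0 < j < n)%N by lia.
rewrite -big_filter.
rewrite (perm_big _ (uniq_perm (filter_uniq _ (PL_uniq _)) (plus_uniq n j) (fun l => @plus_mem n j l Hj'))).
rewrite big_allpairs_dep /Np /Sp -[\sum_(l <- PL j | _) _]big_filter -[\sum_(l <- PL (n - j) | _) _]big_filter big_distrl /=.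
apply: eq_big_seq => s Hs; rewrite big_distrr /=; apply: eq_big_seq => t Ht.
rewrite mem_filter mem_PL in Hs; rewrite mem_filter mem_PL in Ht.
case/andP: Hs => _ HPs; case/andP: Ht => _ HPt.
have Hs0 : s != [::] by apply: (isP_nil _ HPs); lia.
have Ht0 : t != [::] by apply: (isP_nil _ HPt); lia.
rewrite /Fp desl_cat //; last by case: (t) Ht0.
rewrite desl_shift exprD; congr (_ * _).
suff -> : (head 0%N (map (addn j) t) < last 0%N s)%N = false by rewrite addn0.
have Has : all (fun x => (x < j)%N) s by case/and3P: HPs.
have := (allP Has) _ (last_mem Hs0).
by case: (t) Ht0 => // y t' _ /=; lia.
Qed.

Lemma Qm_rec n : Qm n = 'X * \sum_(1 <= j < n) Nm j * Sp (n - j).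
Proof.
rewrite /Qm (big_part _ (k := fsm n) (js := iota 1 (n - 1))); first last.
- by move=> l /andP [_ H]; apply: has_iota_find.
- exact: iota_uniq.
rewrite big_distrr /=.
apply: eq_big_seq => j; rewrite mem_iota => Hj.
have Hj' : (0 < j < n)%N by lia.
rewrite -big_filter.
rewrite (perm_big _ (uniq_perm (filter_uniq _ (PL_uniq _)) (minus_uniq n j) (fun l => @minus_mem n j l Hj'))).
rewrite big_allpairs_dep /Nm /Sp -[\sum_(l <- PL j | _) _]big_filter -[\sum_(l <- PL (n - j) | _) _]big_filter big_distrl big_distrr /=.
apply: eq_big_seq => s Hs; rewrite big_distrr big_distrr /=; apply: eq_big_seq => t Ht.
rewrite mem_filter mem_PL in Hs; rewrite mem_filter mem_PL in Ht.
case/andP: Hs => _ HPs; case/andP: Ht => _ HPt.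
have Hs0 : s != [::] by apply: (isP_nil _ HPs); lia.
have Ht0 : t != [::] by apply: (isP_nil _ HPt); lia.
rewrite /Fp desl_cat //; last by case: (s) Hs0.
rewrite desl_shift.
suff -> : (head 0%N t < last 0%N (map (addn (n - j)) s))%N = true.
  by rewrite !exprD expr1 mulrA [_ * 'X]mulrC.
have Hat : all (fun x => (x < n - j)%N) t by case/and3P: HPt.
have := (allP Hat) _ (head_mem Ht0).
have Hl : last 0%N (map (addn (n - j)) s) = (n - j + last 0 s)%N.
  by case: (s) Hs0 => // x s' _; rewrite /= last_map.
by rewrite Hl; lia.
Qed.

Unset Implicit Arguments.


Lemma big_iota0 (F : nat -> {poly int}) n : \sum_(i <- iota 0 n) F i = \sum_(i < n) F i.
Proof. by rewrite -(big_mkord xpredT) /index_iota subn0. Qed.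

Lemma sum_trees (F : btree -> {poly int}) k :
  \sum_(T <- trees_of_size k.+1) F T =
  \sum_(i < k.+1) \sum_(L <- trees_of_size i) \sum_(R <- trees_of_size (k - i))
      (F (Node true L R) + F (Node false L R)).
Proof.
rewrite /trees_of_size trees_fuelS big_flatten big_map big_iota0.
apply: eq_bigr => i _; have Hi := ltn_ord i.
rewrite (trees_fuel_eq k i i) ?(trees_fuel_eq k (k - i) (k - i)) //; try lia.
rewrite big_flatten /= big_map; apply: eq_bigr => L _.
rewrite big_flatten /= big_map; apply: eq_bigr => R _.
by rewrite !big_cons big_nil addr0.
Qed.

Definition Dt k : {poly int} := \sum_(T <- trees_of_size k | disk T) 'X ^+ nminus T.

Definition RS b m : {poly int} :=
  \sum_(R <- trees_of_size m | disk R &&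
     (match R with Leaf => true | Node b' _ _ => b' != b end)) 'X ^+ nminus R.

Lemma Stree_S b m : Stree b m.+2 =
  \sum_(T <- trees_of_size m.+1 | disk T && (root_label T == Some b)) 'X ^+ nminus T.
Proof. by []. Qed.

Lemma RS_eq b m : RS b m = Stree (~~ b) m.+1.
Proof.
case: m => [|m]; first by rewrite /RS /Stree /= big_cons big_nil /= expr0 addr0.
rewrite /RS Stree_S !(big_mkcond (fun T => _ && _)) !sum_trees.
apply: eq_bigr => i _; apply: eq_bigr => L _; apply: eq_bigr => R _.
by case: b.
Qed.

Lemma D0 : Dt 0 = 1.
Proof. by rewrite /Dt /= big_cons big_nil /= expr0 addr0. Qed.

Lemma D_eq k : Dt k.+1 = S1 k.+2 + S2 k.+2.
Proof.
rewrite /Dt /S1 /S2 !Stree_S !(big_mkcond (fun T => _ && _)) [LHS]big_mkcond !sum_trees.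
rewrite -big_split; apply: eq_bigr => i _.
rewrite -big_split; apply: eq_bigr => L _.
rewrite -big_split; apply: eq_bigr => R _ /=.
by case: (disk L); case: (disk R); case: R => [|[] ? ?] /=; rewrite ?(addr0, add0r).
Qed.

Lemma S1_rec k : S1 k.+2 = \sum_(i < k.+1) Dt i * S2 (k - i).+1.
Proof.
rewrite /S1 Stree_S (big_mkcond (fun T => _ && _)) sum_trees.
apply: eq_bigr => i _; rewrite /S2 -(RS_eq true) /RS /Dt big_distrl [RHS]big_mkcond /=.
apply: eq_bigr => L _; case HL: (disk L); last first.
  by rewrite big1 // => R _ /=; rewrite addr0.
rewrite big_distrr [RHS]big_mkcond /=; apply: eq_bigr => R _ /=.
rewrite andbF addr0 add0n exprD.
by case: (disk R); case: R => [|[] ? ?] /=; rewrite ?mulr0.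
Qed.

Lemma S2_rec k : S2 k.+2 = 'X * \sum_(i < k.+1) Dt i * S1 (k - i).+1.
Proof.
rewrite /S2 Stree_S (big_mkcond (fun T => _ && _)) sum_trees big_distrr.
apply: eq_bigr => i _; rewrite /S1 -(RS_eq false) /RS /Dt big_distrl big_distrr [RHS]big_mkcond /=.
apply: eq_bigr => L _; case HL: (disk L); last first.
  by rewrite big1 ?mulr0 // => R _ /=; rewrite addr0.
rewrite big_distrr big_distrr [RHS]big_mkcond /=; apply: eq_bigr => R _ /=.
rewrite andbF add0r !exprD expr1 mulrA.
by case: (disk R); case: R => [|[] ? ?] /=; rewrite ?mulr0.
Qed.


Lemma Sperm_Sp n : Sperm n = Sp n.
Proof.
transitivity (\sum_(s <- enum 'S_n | avoids_2413_3142 s) ('X ^+ des s : {poly int}));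
  first by rewrite big_enum_cond.
rewrite (eq_bigr (fun s => Fp (lp s))) => [|s _]; last by rewrite /Fp des_lp.
rewrite (eq_bigl (fun s => avL (lp s))) => [|s]; last by rewrite avoids_lp.
rewrite -(big_map (@lp n) avL Fp) /Sp; apply: perm_big.
apply: uniq_perm; first by rewrite map_inj_uniq ?enum_uniq //; exact: lp_inj.
  exact: PL_uniq.
move=> l; rewrite mem_PL; apply/mapP/idP => [[s _ ->]|HP]; first exact: isP_lp.
by have [s Es] := lp_surj HP; exists s; rewrite ?mem_enum.
Qed.

Lemma shift_sum (F : nat -> {poly int}) k :
  \sum_(1 <= j < k.+2) F j = \sum_(i < k.+1) F i.+1.
Proof. by rewrite big_add1 /= big_mkord. Qed.

Lemma conv_sum (A B : nat -> {poly int}) k :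
  \sum_(1 <= j < k.+2) A j * B (k.+2 - j).-1 = \sum_(i < k.+1) B i * A (k - i).+1.
Proof.
rewrite big_add1 /= big_nat_rev big_mkord; apply: eq_bigr => i _.
rewrite mulrC; congr (B _ * A _); have := ltn_ord i; lia.
Qed.

Lemma main_ind n : (0 < n)%N -> [/\ Sp n = Dt n.-1, Np n = S2 n & Nm n = S1 n].
Proof.
elim/ltn_ind: n => n IH Hn.
case: n IH Hn => [|[|k]] IH Hn //.
  by rewrite Sp1 Np1 Nm1 D0 /S1 /S2 /Stree.
have HQp : Qp k.+2 = S1 k.+2.
  rewrite Qp_rec S1_rec -conv_sum; apply: eq_big_nat => j Hj.
  have [_ H2 _] := IH j ltac:(lia) ltac:(lia).
  have [H1 _ _] := IH (k.+2 - j)%N ltac:(lia) ltac:(lia).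
  by rewrite H1 H2.
have HQm : Qm k.+2 = S2 k.+2.
  rewrite Qm_rec S2_rec -conv_sum; congr (_ * _); apply: eq_big_nat => j Hj.
  have [_ _ H2] := IH j ltac:(lia) ltac:(lia).
  have [H1 _ _] := IH (k.+2 - j)%N ltac:(lia) ltac:(lia).
  by rewrite H1 H2.
split.
- by rewrite Sp_split Np_Qm // HQp HQm D_eq.
- by rewrite Np_Qm.
- by rewrite Nm_Qp.
Qed.

Theorem lemma5p9 (n : nat) : (2 <= n)%N ->
  S1 n = \sum_(1 <= j < n) Sperm j * S2 (n - j) /\
  S2 n = 'X * \sum_(1 <= j < n) Sperm j * S1 (n - j).
Proof.
case: n => [|[|k]] // _.
split.
- rewrite S1_rec shift_sum; apply: eq_bigr => i _.
  have [H _ _] := main_ind i.+1 (ltn0Sn i).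
  by rewrite Sperm_Sp H /= (_ : (k.+2 - i.+1 = (k - i).+1)%N) //; have := ltn_ord i; lia.
- rewrite S2_rec shift_sum; congr (_ * _); apply: eq_bigr => i _.
  have [H _ _] := main_ind i.+1 (ltn0Sn i).
  by rewrite Sperm_Sp H /= (_ : (k.+2 - i.+1 = (k - i).+1)%N) //; have := ltn_ord i; lia.
Qed.
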